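(* For every integer $1\le m\le D-2$, the Markov chain on $\Sigma_m$ induced by the local automaton gate set $\mathcal G$ is irreducible: for any $S,S'\in\Sigma_m$ there is a finite sequence $u_1,\dots,u_\ell\in\mathcal G$ with $u_\ell\circ\cdots\circ u_1(S)=S'$.
   Context: Consider $N\ge3$ qubits on a ring (site indices modulo $N$), bitstrings $\mathbf z\in\{0,1\}^N$, $D=2^N$. The gate set is $\mathcal G=\{u_{iab}: i\in\{1,\dots,N\},\ a,b\in\{0,1\}\}$, where $u_{iab}$ is the permutation of $\{0,1\}^N$ that flips bit $i$ if and only if bit $i-1$ equals $a$ and bit $i+1$ equals $b$. $\Sigma_m$ is the set of subsets of $\{0,1\}^N$ of cardinality $m$, with $u(S)=\{u(\mathbf z):\mathbf z\in S\}$. The induced Markov chain has transition matrix $\Gamma_{S,S'}=\frac{1}{|\mathcal G|}\sum_{u\in\mathcal G}\delta_{S',u(S)}$. *)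

(* Defs.v *)
From mathcomp Require Import all_boot.
Set Implicit Arguments. Unset Strict Implicit. Unset Printing Implicit Defensive.

(* Sites of the ring are 'I_N = {0,...,N-1} (paper: 1..N), arithmetic mod N. *)
Definition bitstring (N : nat) := {ffun 'I_N -> bool}.

Definition gate (N : nat) (i : 'I_N) (a b : bool) (z : bitstring N) : bitstring N :=
  if (z (ord_pred i) == a) && (z (ordS i) == b)
  then [ffun j => if j == i then ~~ z j else z j]
  else z.

Definition gate_label (N : nat) := ('I_N * bool * bool)%type.

Definition apply_label (N : nat) (g : gate_label N) : bitstring N -> bitstring N :=
  let: (i, a, b) := g in gate i a b.

Definition act_set (N : nat) (g : gate_label N) (S : {set bitstring N}) :
  {set bitstring N} := apply_label g @: S.

Definition act_seq (N : nat) (s : seq (gate_label N)) (S : {set bitstring N}) :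
  {set bitstring N} := foldl (fun T g => act_set g T) S s.

(* Main.v *)
Require Import Defs.
From mathcomp Require Import all_boot.
From mathcomp Require Import zify.
Set Implicit Arguments. Unset Strict Implicit. Unset Printing Implicit Defensive.

Lemma modn_cases m N : 0 < N -> m < 2 * N -> m %% N = if m < N then m else m - N.
Proof.
move=> N0 hm; case: ifP => h; first by rewrite modn_small.
have hle : N <= m by rewrite leqNgt h.
by rewrite -{1}(subnK hle) modnDr modn_small //; lia.
Qed.





Lemma valS N (hN : 2 < N) (t : 'I_N) : nat_of_ord (ordS t) = if t.+1 < N then t.+1 else t.+1 - N.
Proof. rewrite /= modn_cases //; [lia | have := hN; have := ltn_ord t; lia]. Qed.

Lemma valP N (hN : 2 < N) (t : 'I_N) : nat_of_ord (ord_pred t) = if 0 < nat_of_ord t then (nat_of_ord t).-1 else N.-1.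
Proof.
rewrite /= modn_cases; [|lia|have := hN; have := ltn_ord t; lia].
have := hN; have := ltn_ord t; case: ifP; case: ifP; lia.
Qed.

Lemma ordS_neq N (hN : 2 < N) (t : 'I_N) : ordS t != t.
Proof. apply/eqP => /(congr1 (@nat_of_ord N)); rewrite valS //; have := hN; have := ltn_ord t; case: ifP; lia. Qed.

Lemma ordP_neq N (hN : 2 < N) (t : 'I_N) : ord_pred t != t.
Proof. apply/eqP => /(congr1 (@nat_of_ord N)); rewrite valP //; have := hN; have := ltn_ord t; case: ifP; lia. Qed.

Lemma ordSP_neq N (hN : 2 < N) (t : 'I_N) : ordS t != ord_pred t.
Proof. apply/eqP => /(congr1 (@nat_of_ord N)); rewrite valP // valS //; have := hN; have := ltn_ord t; case: ifP; case: ifP; lia. Qed.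


Definition flip N (t : 'I_N) (z : bitstring N) : bitstring N :=
  [ffun j => if j == t then ~~ z j else z j].
Definition F N (t : 'I_N) (P : bitstring N -> bool) z := if P z then flip t z else z.
Definition Pc N (C : {set 'I_N}) (c : bitstring N) (z : bitstring N) :=
  [forall j in C, z j == c j].
Definition cg N (t : 'I_N) C c := F t (Pc C c).
Definition run N (s : seq (gate_label N)) z := foldl (fun z g => apply_label g z) z s.
Definition Realizable N (f : bitstring N -> bitstring N) := exists s, forall z, run s z = f z.
Definition Reach N (S T : {set bitstring N}) := exists s, act_seq s S = T.

Lemma flipK N (t : 'I_N) z : flip t (flip t z) = z.
Proof. by apply/ffunP => j; rewrite !ffunE; case: eqP => // _; rewrite negbK. Qed.

Lemma flipC N (s t : 'I_N) z : flip s (flip t z) = flip t (flip s z).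
Proof. by apply/ffunP => j; rewrite !ffunE; case: eqP; case: eqP. Qed.

Lemma flip_out N (t j : 'I_N) z : j != t -> flip t z j = z j.
Proof. by rewrite ffunE => /negbTE ->. Qed.

Lemma flip_in N (t : 'I_N) z : flip t z t = ~~ z t.
Proof. by rewrite ffunE eqxx. Qed.

Lemma Pc_flip N (C : {set 'I_N}) c t z : t \notin C -> Pc C c (flip t z) = Pc C c z.
Proof.
move=> tC; apply: eq_forallb => j; case jC: (j \in C) => //=.
by rewrite flip_out //; apply: contraNneq tC => <-.
Qed.

Lemma Pc_U N (A B : {set 'I_N}) c z : Pc (A :|: B) c z = Pc A c z && Pc B c z.
Proof.
apply/forall_inP/andP => [H|[/forall_inP HA /forall_inP HB]].
  by split; apply/forall_inP => j jX; apply: H; rewrite inE jX ?orbT.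
by move=> j; rewrite inE => /orP[/HA|/HB].
Qed.

Lemma Pc_D1 N (C : {set 'I_N}) c s z : s \in C ->
  Pc C c z = (z s == c s) && Pc (C :\ s) c z.
Proof.
move=> sC; apply/forall_inP/andP => [H|[/eqP Hs /forall_inP H]].
  split; first by apply: H.
  by apply/forall_inP => j; rewrite inE => /andP[_ /H].
by move=> j jC; case: (eqVneq j s) => [->|js]; [rewrite Hs|apply: H; rewrite !inE js].
Qed.

Lemma Pc_D N (C : {set 'I_N}) c s z : s \in C ->
  (Pc C c (flip s z) != Pc C c z) = Pc (C :\ s) c z.
Proof.
move=> sC; rewrite !(Pc_D1 _ _ sC) Pc_flip ?setD11 // flip_in.
by case: (Pc _ _ z); case: (z s); case: (c s); rewrite ?andbF ?andbT.
Qed.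

Lemma run_cat N (s1 s2 : seq (gate_label N)) z : run (s1 ++ s2) z = run s2 (run s1 z).
Proof. by rewrite /run foldl_cat. Qed.

Lemma Real_comp N (f g : bitstring N -> bitstring N) :
  Realizable f -> Realizable g -> Realizable (f \o g).
Proof.
move=> [s1 H1] [s2 H2]; exists (s2 ++ s1) => z.
by rewrite run_cat H2 H1.
Qed.

Lemma Real_ext N (f g : bitstring N -> bitstring N) :
  Realizable f -> (forall z, f z = g z) -> Realizable g.
Proof. by move=> [s H] E; exists s => z; rewrite H E. Qed.

Lemma act_seq_run N (s : seq (gate_label N)) S : act_seq s S = run s @: S.
Proof.
elim: s S => [|g s IH] S /=; first by rewrite imset_id.
rewrite /act_seq /= -/(act_seq s _) IH /act_set -imset_comp.
by apply: eq_imset.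
Qed.

Lemma F_xor N (t : 'I_N) P Q z :
  (forall w, P (flip t w) = P w) -> (forall w, Q (flip t w) = Q w) ->
  F t P (F t Q z) = F t (fun w => P w (+) Q w) z.
Proof.
move=> HP HQ; rewrite /F; case: (Q z); rewrite ?HP; case: (P z) => //=.
by rewrite flipK.
Qed.

Lemma F_comm N (s t : 'I_N) P Q z : s != t ->
  (forall w, P (flip t w) = P w) -> (forall w, Q (flip s w) = Q w) ->
  (forall w, Q (flip t w) = Q w) ->
  F t P (F s Q (F t P (F s Q z))) = F t (fun w => Q w && (P (flip s w) != P w)) z.
Proof.
move=> st HPt HQs HQt; rewrite /F.
case Qz: (Q z) => /=.
  case Pz': (P (flip s z)).
    rewrite HQt HQs Qz flipC flipK HPt.
    case Pz: (P z) => //=.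
    by rewrite flipK.
  rewrite HQs Qz flipK.
  by case Pz: (P z).
case Pz: (P z) => //.
  by rewrite HQt Qz HPt Pz flipK.
by rewrite Qz Pz.
Qed.

Lemma F_ext N (t : 'I_N) P Q z : P z = Q z -> F t P z = F t Q z.
Proof. by rewrite /F => ->. Qed.

Lemma cg_move N (t s : 'I_N) C C' c :
  Realizable (cg t C c) -> Realizable (cg s C' c) -> s \in C -> t \notin C ->
  s \notin C' -> t \notin C' -> Realizable (cg t (C' :|: (C :\ s)) c).
Proof.
move=> RA RB sC tC sC' tC'.
have st : s != t by apply: contraNneq tC => <-.
have R := Real_comp (Real_comp RA RB) (Real_comp RA RB).
apply: (Real_ext R) => z /=; rewrite /cg F_comm //.
- by apply: F_ext; rewrite Pc_D // Pc_U.
- by move=> w; rewrite Pc_flip.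
- by move=> w; rewrite Pc_flip.
- by move=> w; rewrite Pc_flip.
Qed.

Lemma Pc1 N (a : 'I_N) c z : Pc [set a] c z = (z a == c a).
Proof.
apply/forall_inP/idP => [H|E]; first by apply: H; rewrite inE.
by move=> j; rewrite inE => /eqP ->.
Qed.

Lemma cg_base2 N (hN : 2 < N) (t : 'I_N) c :
  Realizable (cg t [set ord_pred t; ordS t] c).
Proof.
exists [:: (t, c (ord_pred t), c (ordS t))] => z /=.
by rewrite /cg /F Pc_U !Pc1.
Qed.

Lemma cg_base1 N (hN : 2 < N) (t : 'I_N) c :
  Realizable (cg t [set ordS t] c).
Proof.
exists [:: (t, false, c (ordS t)); (t, true, c (ordS t))] => z /=.
rewrite /run /=.
change (F t (fun w => (w (ord_pred t) == true) && (w (ordS t) == c (ordS t)))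
  (F t (fun w => (w (ord_pred t) == false) && (w (ordS t) == c (ordS t))) z) = cg t [set ordS t] c z).
rewrite F_xor.
- apply: F_ext; rewrite Pc1; case: (z (ord_pred t)) => /=; by case: (z (ordS t) == c (ordS t)).
- by move=> w; rewrite !flip_out // ?ordP_neq ?ordS_neq.
- by move=> w; rewrite !flip_out // ?ordP_neq ?ordS_neq.
Qed.

Lemma modn_neq t e N : t < N -> 0 < e < N -> (t + e) %% N != t.
Proof.
move=> tN /andP[e0 eN]; rewrite modn_cases; [|lia|lia].
case: ifP; lia.
Qed.

Lemma ord_valE N (i j : 'I_N) : nat_of_ord i = nat_of_ord j -> i = j.
Proof. by move=> h; apply: val_inj. Qed.

Lemma cg_single_aux N (hN : 2 < N) (t : 'I_N) c d : 0 < d < N ->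
  forall j : 'I_N, nat_of_ord j = (t + d) %% N -> Realizable (cg t [set j] c).
Proof.
have N0 : 0 < N by lia.
elim: d => [|d IH] // /andP[_ dN] j hj.
case: (posnP d) => [d0|dpos].
  have -> : j = ordS t by apply: ord_valE; rewrite hj d0 addn1.
  exact: cg_base1.
pose s : 'I_N := Ordinal (ltn_pmod (t + d) N0).
have Rs : Realizable (cg t [set s] c) by apply: IH => //; lia.
have js : j = ordS s.
  by apply: ord_valE; rewrite hj /= -[in RHS]addn1 modnDml addn1 addnS.
have := cg_move Rs (cg_base1 hN s c) (set11 s).
rewrite setDv setU0 -js; apply.
- rewrite inE; apply/eqP => /(congr1 (@nat_of_ord N)) /= ts.
  have h : 0 < d < N by lia.
  by have := modn_neq (ltn_ord t) h; rewrite -ts eqxx.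
- by rewrite inE js eq_sym (ordS_neq hN).
- rewrite inE; apply/eqP => /(congr1 (@nat_of_ord N)) tj.
  have h : 0 < d.+1 < N by lia.
  by have := modn_neq (ltn_ord t) h; rewrite -hj tj eqxx.
Qed.

Lemma cg_single N (hN : 2 < N) (t j : 'I_N) c : j != t -> Realizable (cg t [set j] c).
Proof.
move=> jt; have jN := ltn_ord j; have tN := ltn_ord t.
have jt' : nat_of_ord j != nat_of_ord t by [].
apply: (@cg_single_aux N hN t c (if t < j then j - t else j + N - t)).
  by case: ifP; lia.
rewrite modn_cases; [|lia|case: ifP; lia].
case: ifP; case: ifP; lia.
Qed.

Lemma cg_swap N (hN : 2 < N) (t s j : 'I_N) C c :
  Realizable (cg t C c) -> s \in C -> t \notin C -> j != t -> j != s ->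
  Realizable (cg t (j |: (C :\ s)) c).
Proof.
move=> R sC tC jt js; apply: cg_move => //; first exact: cg_single.
- by rewrite inE eq_sym.
- by rewrite inE eq_sym.
Qed.

Lemma cg_pair_b N (hN : 2 < N) (t j : 'I_N) c : j != t -> j != ordS t ->
  Realizable (cg t [set j; ordS t] c).
Proof.
move=> jt jb; case: (eqVneq j (ord_pred t)) => [->|ja]; first exact: cg_base2.
have tC : t \notin [set ord_pred t; ordS t].
  by rewrite !inE negb_or eq_sym (ordP_neq hN) eq_sym (ordS_neq hN).
have := cg_swap hN (cg_base2 hN t c) (setU11 _ _) tC jt ja.
rewrite setU1K // inE eq_sym (ordSP_neq hN) //.
Qed.

Lemma cg_pair N (hN : 2 < N) (t j k : 'I_N) c : j != t -> k != t -> j != k ->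
  Realizable (cg t [set j; k] c).
Proof.
move=> jt kt jk.
case: (eqVneq k (ordS t)) => [kb|kb]; first by rewrite kb; apply: cg_pair_b => //; rewrite -kb.
case: (eqVneq j (ordS t)) => [jb|jb].
  by rewrite setUC jb; apply: cg_pair_b => //; rewrite -jb eq_sym.
have bC : ordS t \in [set j; ordS t] by rewrite !inE eqxx orbT.
have tC : t \notin [set j; ordS t].
  by rewrite !inE negb_or eq_sym jt eq_sym (ordS_neq hN).
have := cg_swap hN (cg_pair_b hN c jt jb) bC tC kt kb.
have -> : [set j; ordS t] :\ ordS t = [set j].
  apply/setP => i; rewrite !inE; case: (eqVneq i (ordS t)) => [->|] /=.
    by rewrite eq_sym (negbTE jb).
  by rewrite orbF.
by rewrite setUC.
Qed.

Lemma cg_all N (hN : 2 < N) (c : bitstring N) n : forall (t : 'I_N) (C : {set 'I_N}), t \notin C -> #|C| = n.+1 ->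
  n.+1 <= N - 2 -> Realizable (cg t C c).
Proof.
elim/ltn_ind: n => n IH t C tC cC nN.
case: n IH cC nN => [|[|n]] IH cC nN.
- move/eqP/cards1P: cC => [j CE]; move: tC; rewrite CE inE eq_sym => tj; exact: cg_single.
- move/eqP/cards2P: cC => [j [k [jk CE]]]; move: tC; rewrite CE !inE negb_or => /andP[tj tk].
  by apply: cg_pair; rewrite // eq_sym.
have [j jC] : exists j, j \in C by apply/card_gt0P; rewrite cC.
have [k kC] : exists k, k \in C :\ j.
  by apply/card_gt0P; move: cC; rewrite (cardsD1 j) jC; lia.
have [s sC] : exists s, s \in ~: (t |: C).
  apply/card_gt0P; have := cardsC (t |: C); rewrite cardsU1 tC card_ord cC; lia.
move: sC; rewrite !inE negb_or => /andP[st sC].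
move: (kC); rewrite !inE => /andP[kj kC'].
set C0 := C :\ j :\ k.
have sC0 : s \notin C0 by rewrite !inE (negbTE sC) !andbF.
have tC0 : t \notin s |: C0.
  by rewrite !inE negb_or eq_sym st /= (negbTE tC) !andbF.
have cC0 : #|s |: C0| = n.+2.
  rewrite cardsU1 sC0 /C0; move: cC; rewrite (cardsD1 j) jC (cardsD1 k (C :\ j)) kC !add1n; lia.
have R1 := IH n.+1 (ltnSn _) t (s |: C0) tC0 cC0 (ltnW nN).
have R2 : Realizable (cg s [set j; k] c).
  have js : j != s by apply: contraNneq sC => <-.
  have ks : k != s by apply: contraNneq sC => <-.
  by apply: cg_pair => //; rewrite eq_sym.
have := cg_move R1 R2 (setU11 _ _) tC0.
rewrite setU1K //.
have -> : [set j; k] :|: C0 = C.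
  by rewrite -setUA /C0 setD1K // setD1K.
apply.
- by rewrite !inE negb_or; apply/andP; split; apply: contraNneq sC => ->.
- by rewrite !inE negb_or; apply/andP; split; apply: contraNneq tC => ->.
Qed.

Definition sig3 N (t k : 'I_N) (x : bitstring N) (z : bitstring N) : bitstring N :=
  if z == x then flip k (flip t x)
  else if z == flip k (flip t x) then flip t x
  else if z == flip t x then x else z.

Lemma cyc3 N (t k : 'I_N) (C C' : {set 'I_N}) (x : bitstring N) :
  t \notin C -> k \in C -> t \in C' -> k \notin C' ->
  (forall i, [|| i \in C, i \in C', i == t | i == k]) ->
  Realizable (cg t C x) -> Realizable (cg k C' (flip t x)) ->
  Realizable (sig3 t k x).
Proof.
move=> tC kC tC' kC' cov RA RB.
have kt : k != t by apply: contraNneq tC => <-.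
have tk : t != k by rewrite eq_sym.
have R := Real_comp (Real_comp RA RB) (Real_comp RA RB).
apply: (Real_ext R) => z /=.
set y := flip t x; set r := flip k y.
have agree : forall u w : bitstring N, (forall i, i \in C -> u i = w i) ->
    (forall i, i \in C' -> u i = w i) -> u t = w t -> u k = w k -> u = w.
  move=> u w h1 h2 h3 h4; apply/ffunP => i.
  by case/or4P: (cov i) => [/h1|/h2|/eqP->|/eqP->].
have PaE : forall u, Pc C x u -> forall i, i \in C -> u i = x i.
  by move=> u /forall_inP h i /h /eqP.
have PbE : forall u, Pc C' y u -> forall i, i \in C' -> u i = y i.
  by move=> u /forall_inP h i /h /eqP.
have Pat : forall u, Pc C x (flip t u) = Pc C x u by move=> u; rewrite Pc_flip.
have Pbk : forall u, Pc C' y (flip k u) = Pc C' y u by move=> u; rewrite Pc_flip.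
have ne : forall i j : 'I_N, i \in C -> j \notin C -> i != j.
  by move=> i j iC; apply: contraNneq => <-.
have ne' : forall i j : 'I_N, i \in C' -> j \notin C' -> i != j.
  by move=> i j iC; apply: contraNneq => <-.
have H1 : forall u, Pc C' y u -> Pc C x (flip k u) -> u = r.
  move=> u hb ha; apply: agree.
  - move=> i iC; have := PaE _ ha i iC; have it := ne _ _ iC tC.
    case: (eqVneq i k) => [->|ik]; first by rewrite !flip_in /y flip_out // => <-; rewrite negbK.
    by rewrite /r /y !flip_out.
  - move=> i iC'; have ik := ne' _ _ iC' kC'.
    by rewrite (PbE _ hb i iC') /r flip_out.
  - by rewrite (PbE _ hb t tC') /r flip_out // eq_sym.
  - by have := PaE _ ha k kC; rewrite /r !flip_in /y flip_out // => <-; rewrite negbK.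
have H2 : forall u, Pc C' y u -> Pc C x u -> u = y.
  move=> u hb ha; apply: agree.
  - by move=> i iC; have it := ne _ _ iC tC; rewrite (PaE _ ha i iC) /y flip_out.
  - by move=> i iC'; rewrite (PbE _ hb i iC').
  - by rewrite (PbE _ hb t tC').
  - by rewrite (PaE _ ha k kC) /y flip_out.
have H3 : forall u, Pc C x u -> Pc C' y (flip t u) -> u = x.
  move=> u ha hb; apply: agree.
  - by move=> i iC; rewrite (PaE _ ha i iC).
  - move=> i iC'; have := PbE _ hb i iC'.
    case: (eqVneq i t) => [->|it]; first by rewrite /y !flip_in => /negb_inj.
    by rewrite /y !flip_out.
  - by have := PbE _ hb t tC'; rewrite /y !flip_in => /negb_inj.
  - by rewrite (PaE _ ha k kC).
have Pax : Pc C x x by apply/forall_inP.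
have Pby : Pc C' y y by apply/forall_inP.
have Pbx : Pc C' y x = false.
  by apply/negbTE/negP => /PbE /(_ t tC'); rewrite /y flip_in; case: (x t).
have Par : Pc C x r = false.
  apply/negbTE/negP => /PaE /(_ k kC); rewrite /r flip_in /y flip_out //.
  by case: (x k).
have Pay : Pc C x y by rewrite /y Pat.
have Pbr : Pc C' y r by rewrite /r Pbk.
have yx : y != x by apply/eqP => /ffunP /(_ t); rewrite /y flip_in; case: (x t).
have ry : r != y by apply/eqP => /ffunP /(_ k); rewrite /r flip_in; case: (y k).
have rx : r != x.
  by apply/eqP => /ffunP /(_ t); rewrite /r flip_out // /y flip_in; case: (x t).
have Bx : F k (Pc C' y) x = x by rewrite /F Pbx.
have Ax : F t (Pc C x) x = y by rewrite /F Pax.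
have By : F k (Pc C' y) y = r by rewrite /F Pby.
have Ar : F t (Pc C x) r = r by rewrite /F Par.
have Br : F k (Pc C' y) r = y by rewrite /F Pbr /r flipK.
have Ay : F t (Pc C x) y = x by rewrite /F Pay /y flipK.
rewrite /cg /sig3 -/y -/r.
case: (eqVneq z x) => [->|zx]; first by rewrite Bx Ax By Ar.
case: (eqVneq z r) => [->|zr]; first by rewrite Br Ay Bx Ax.
case: (eqVneq z y) => [->|zy]; first by rewrite By Ar Br Ay.
rewrite /F; case hb: (Pc C' y z).
  case ha: (Pc C x (flip k z)); first by rewrite (H1 _ hb ha) eqxx in zr.
  rewrite Pbk hb flipK.
  case ha': (Pc C x z) => //; by rewrite (H2 _ hb ha') eqxx in zy.
case ha: (Pc C x z); last by rewrite hb ha.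
case hb': (Pc C' y (flip t z)); first by rewrite (H3 _ ha hb') eqxx in zx.
by rewrite Pat ha flipK.
Qed.

Lemma Reach_refl N (S : {set bitstring N}) : Reach S S.
Proof. by exists [::]. Qed.

Lemma Reach_trans N (S T U : {set bitstring N}) : Reach S T -> Reach T U -> Reach S U.
Proof. by move=> [s1 <-] [s2 <-]; exists (s1 ++ s2); rewrite /act_seq foldl_cat. Qed.

Lemma Reach_real N (f : bitstring N -> bitstring N) S : Realizable f -> Reach S (f @: S).
Proof. by move=> [s H]; exists s; rewrite act_seq_run; apply: eq_imset. Qed.

Lemma imset_inv (T : finType) (f h : T -> T) (S : {set T}) y :
  (forall z, f (h z) = z) -> (forall z, h (f z) = z) -> (y \in f @: S) = (h y \in S).
Proof.
move=> fh hf; apply/imsetP/idP => [[z zS ->]|hy]; first by rewrite hf.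
by exists (h y); rewrite ?fh.
Qed.

Definition tau (T : eqType) (x y z : T) := if z == x then y else if z == y then x else z.

Lemma tauK (T : eqType) (x y : T) z : tau x y (tau x y z) = z.
Proof.
rewrite /tau; case: (eqVneq z x) => [->|zx]; first by rewrite eqxx; case: eqVneq.
case: (eqVneq z y) => [->|zy]; first by rewrite eqxx.
by rewrite (negbTE zx) (negbTE zy).
Qed.

Lemma mem_tau (T : finType) (x y : T) (S : {set T}) w : (w \in tau x y @: S) = (tau x y w \in S).
Proof. by apply: imset_inv; apply: tauK. Qed.

Lemma sig3_real N (hN : 2 < N) (t : 'I_N) x : Realizable (sig3 t (ordS t) x).
Proof.
have h1 := ordS_neq hN t; have h2 := ordP_neq hN t; have h3 := ordSP_neq hN t.
apply: (@cyc3 N t (ordS t) [set ord_pred t; ordS t] (~: [set ordS t; ord_pred t])).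
- by rewrite !inE negb_or !(eq_sym t) h1 h2.
- by rewrite !inE eqxx orbT.
- by rewrite !inE negb_or !(eq_sym t) h1 h2.
- by rewrite !inE eqxx.
- by move=> i; rewrite !inE; case: (i == ord_pred t); case: (i == ordS t).
- exact: cg_base2.
- have cC := cardsC [set ordS t; ord_pred t].
  rewrite cards2 h3 card_ord /= in cC.
  have cC' : #|~: [set ordS t; ord_pred t]| = (N - 3).+1 by move: cC; set X := #|_|; lia.
  apply: (@cg_all N hN _ (N - 3) _ _ _ cC').
  + by rewrite !inE eqxx.
  + lia.
Qed.

Lemma sig3_vals N (t k : 'I_N) x (kt : k != t) :
  let y := flip t x in let r := flip k y in
  [/\ sig3 t k x x = r, sig3 t k x r = y, sig3 t k x y = x,
      [/\ y != x, r != y & r != x] &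
      forall w, w != x -> w != y -> w != r -> sig3 t k x w = w].
Proof.
move=> y r.
have tk : t != k by rewrite eq_sym.
have yx : y != x by apply/eqP => /ffunP /(_ t); rewrite /y flip_in; case: (x t).
have ry : r != y by apply/eqP => /ffunP /(_ k); rewrite /r flip_in; case: (y k).
have rx : r != x.
  by apply/eqP => /ffunP /(_ t); rewrite /r flip_out // /y flip_in; case: (x t).
have yr : y != r by rewrite eq_sym.
rewrite /sig3 -/y -/r; split.
- by rewrite eqxx.
- by rewrite (negbTE rx) eqxx.
- by rewrite (negbTE yx) (negbTE yr) eqxx.
- by split.
- by move=> w wx wy wr; rewrite (negbTE wx) (negbTE wr) (negbTE wy).
Qed.

Lemma swap_adj N (hN : 2 < N) (t : 'I_N) x (S : {set bitstring N}) :
  Reach S (tau x (flip t x) @: S).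
Proof.
have kt : ordS t != t := ordS_neq hN t.
have [Ex Er Ey [yx ry rx] Ew] := sig3_vals x kt.
move: Ex Er Ey yx ry rx Ew.
set k := ordS t; set y := flip t x; set r := flip k y; set f := sig3 t k x.
move=> Ex Er Ey yx ry rx Ew.
have f3 : forall z, f (f (f z)) = z.
  move=> z; case: (eqVneq z x) => [->|zx]; first by rewrite Ex Er Ey.
  case: (eqVneq z y) => [->|zy]; first by rewrite Ey Ex Er.
  case: (eqVneq z r) => [->|zr]; first by rewrite Er Ey Ex.
  by rewrite !Ew.
have memf : forall w, (w \in f @: S) = (f (f w) \in S).
  by move=> w; apply: (@imset_inv _ f (f \o f)) => z /=; apply: f3.
have memff : forall w, (w \in (f \o f) @: S) = (f w \in S).
  by move=> w; apply: (@imset_inv _ (f \o f) f) => z /=; apply: f3.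
have tx : tau x y x = y by rewrite /tau eqxx.
have ty : tau x y y = x by rewrite /tau (negbTE yx) eqxx.
have tr : tau x y r = r by rewrite /tau (negbTE rx) (negbTE ry).
have tw : forall w, w != x -> w != y -> tau x y w = w.
  by move=> w wx wy; rewrite /tau (negbTE wx) (negbTE wy).
case: (boolP ((x \in S) == (y \in S))) => [/eqP hxy|hxy].
  have -> : tau x y @: S = S.
    apply/setP => w; rewrite mem_tau.
    case: (eqVneq w x) => [->|wx]; first by rewrite tx.
    case: (eqVneq w y) => [->|wy]; first by rewrite ty.
    by rewrite tw.
  exact: Reach_refl.
case: (boolP ((r \in S) == (x \in S))) => [/eqP hrx|hrx].
  have -> : tau x y @: S = f @: S.
    apply/setP => w; rewrite mem_tau memf.
    case: (eqVneq w x) => [->|wx]; first by rewrite tx Ex Er.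
    case: (eqVneq w y) => [->|wy]; first by rewrite ty Ey Ex.
    case: (eqVneq w r) => [->|wr]; first by rewrite tr Er Ey.
    by rewrite tw // !Ew.
  exact/Reach_real/sig3_real.
have hry : (r \in S) = (y \in S).
  by move: hxy hrx; case: (r \in S); case: (x \in S); case: (y \in S).
have -> : tau x y @: S = (f \o f) @: S.
  apply/setP => w; rewrite mem_tau memff.
  case: (eqVneq w x) => [->|wx]; first by rewrite tx Ex.
  case: (eqVneq w y) => [->|wy]; first by rewrite ty Ey.
  case: (eqVneq w r) => [->|wr]; first by rewrite tr Er.
  by rewrite tw // !Ew.
by apply/Reach_real/Real_comp; apply: sig3_real.
Qed.

Lemma tau_conj (T : eqType) (x x' y z : T) : x != y -> x' != x -> x' != y ->
  tau x x' (tau x' y (tau x x' z)) = tau x y z.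
Proof.
move=> xy x'x x'y.
have yx : y != x by rewrite eq_sym.
have xx' : x != x' by rewrite eq_sym.
have yx' : y != x' by rewrite eq_sym.
rewrite /tau.
case: (eqVneq z x) => [e|zx]; first subst z.
  by rewrite ?(eqxx, negbTE xy, negbTE yx, negbTE xx', negbTE x'x, negbTE x'y, negbTE yx').
case: (eqVneq z x') => [e|zx']; first subst z.
  by rewrite ?(eqxx, negbTE xy, negbTE yx, negbTE xx', negbTE x'x, negbTE x'y, negbTE yx').
case: (eqVneq z y) => [e|zy]; first subst z.
  by rewrite ?(eqxx, negbTE xy, negbTE yx, negbTE xx', negbTE x'x, negbTE x'y, negbTE yx').
by rewrite ?(eqxx, negbTE zx, negbTE zx', negbTE zy).
Qed.

Lemma tau_all N (hN : 2 < N) n : forall (x y : bitstring N),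
  #|[set i | x i != y i]| = n -> forall S, Reach S (tau x y @: S).
Proof.
elim: n => [|n IH] x y hD S.
  have -> : y = x.
    apply/ffunP => i; apply/eqP; rewrite eq_sym; apply/negPn/negP => hi.
    by move: hD; rewrite (cardsD1 i) inE hi.
  have -> : tau x x @: S = S.
    by apply/setP => w; rewrite mem_tau /tau; case: eqVneq => [->|].
  exact: Reach_refl.
have [i] : exists i, i \in [set i | x i != y i] by apply/card_gt0P; rewrite hD.
rewrite inE => hi.
set x' := flip i x.
have hD' : #|[set j | x' j != y j]| = n.
  have -> : [set j | x' j != y j] = [set j | x j != y j] :\ i.
    apply/setP => j; rewrite !inE /x'; case: (eqVneq j i) => [->|ji] /=.
      by rewrite flip_in; move: hi; case: (x i); case: (y i).
    by rewrite flip_out.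
  by move: hD; rewrite (cardsD1 i) inE hi add1n => -[].
case: (eqVneq x' y) => [<-|x'y]; first exact: swap_adj.
have xy : x != y by apply: contraNneq hi => ->.
have x'x : x' != x by apply/eqP => /ffunP /(_ i); rewrite /x' flip_in; case: (x i).
apply: Reach_trans (swap_adj hN i x S) _.
apply: Reach_trans (IH x' y hD' _) _.
have -> : tau x y @: S = tau x x' @: (tau x' y @: (tau x x' @: S)).
  by rewrite -!imset_comp; apply: eq_imset => z /=; rewrite tau_conj.
exact: swap_adj.
Qed.

Lemma reach_card N (hN : 2 < N) n : forall (S T : {set bitstring N}),
  #|S| = #|T| -> #|S :\: T| = n -> Reach S T.
Proof.
elim: n => [|n IH] S T hc hd.
  have -> : S = T.
    apply/eqP; rewrite eqEcard hc leqnn andbT.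
    by rewrite -setD_eq0 -cards_eq0 hd.
  exact: Reach_refl.
have [x] : exists x, x \in S :\: T by apply/card_gt0P; rewrite hd.
have hST := cardsID T S; have hTS := cardsID S T.
have [y] : exists y, y \in T :\: S.
  apply/card_gt0P; move: hST hTS; rewrite setIC hc hd; lia.
rewrite !inE => /andP[yS yT] /andP[xT xS].
apply: Reach_trans (tau_all hN (erefl _) S) _.
apply: IH.
  rewrite card_imset ?hc //; exact: can_inj (tauK x y).
have -> : tau x y @: S :\: T = (S :\: T) :\ x.
  apply/setP => w; rewrite !inE mem_tau /tau.
  case: (eqVneq w x) => [->|wx] /=; first by rewrite (negbTE yS) andbF.
  case: (eqVneq w y) => [->|wy] /=; first by rewrite yT.
  by [].
by move: hd; rewrite (cardsD1 x) !inE xS (negbTE xT) add1n => -[].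
Qed.

Theorem lemma3 (N : nat) (hN : 3 <= N) (m : nat)
  (hm1 : 1 <= m) (hm2 : m <= 2 ^ N - 2)
  (S S' : {set bitstring N}) (hS : #|S| = m) (hS' : #|S'| = m) :
  exists s : seq (gate_label N), act_seq s S = S'.
Proof.
exact: (@reach_card N hN _ S S' (etrans hS (esym hS')) (erefl _)).
Qed.
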